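(* Let $s$ be an integer with $\gcd(s,n)=1$ and let $\mathcal C\subseteq\mathcal L_{n,q}$ be an $\mathbb F_{q^n}$-linear MRD code of dimension $k$ containing the code $\mathcal G=\langle p(x),p(x)^{[s]},\ldots,p(x)^{[s(k-2)]}\rangle_{\mathbb F_{q^n}}$ (equivalent to $\mathcal G_{k-1,s}$), where $p(x)$ is an invertible linearized polynomial. Suppose there is $g(x)\in\mathcal C\setminus\mathcal G$ with $g(x)\in\langle p(x)^{[-s]},p(x)^{[s(k-1)]}\rangle_{\mathbb F_{q^n}}$ of the form $g(x)=p(x)^{[-s]}+\eta\,p(x)^{[s(k-1)]}$, where $\eta\in\mathbb F_{q^n}$ and $\mathrm N_{q^n/q}(\eta)\neq(-1)^{kn}$. Then $\mathcal C$ is equivalent to $\mathcal H_{k,s}(\eta^{[s]})$.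
   Context: $q$ is a prime power, $[i]:=q^i$ (exponents of $[\,\cdot\,]$ read modulo $n$, so $[-s]=[n-s]$). $\mathcal L_{n,q}$ is the $\mathbb F_{q^n}$-vector space of linearized polynomials $f(x)=\sum_{i=0}^{n-1}a_ix^{[i]}$, $a_i\in\mathbb F_{q^n}$, identified with $\mathbb F_q$-linear maps of $\mathbb F_{q^n}$. For $f(x)=\sum_i a_ix^{[i]}$, $f(x)^{[j]}:=x^{[j]}\circ f(x)=\sum_i a_i^{[j]}x^{[(i+j)\bmod n]}$. A code $\mathcal C\subseteq\mathcal L_{n,q}$ (an $\mathbb F_q$-subspace with rank distance $\mathrm{rk}(f-g)$ and minimum distance $d$) is MRD if $|\mathcal C|=q^{n(n-d+1)}$. $\mathrm N_{q^n/q}(\eta)=\prod_{i=0}^{n-1}\eta^{[i]}$. $\mathcal G_{k,s}=\langle x,\ldots,x^{[s(k-1)]}\rangle_{\mathbb F_{q^n}}$ and $\mathcal H_{k,s}(\eta)=\langle x+\eta x^{[sk]},x^{[s]},\ldots,x^{[s(k-1)]}\rangle_{\mathbb F_{q^n}}$. Codes $\mathcal C,\mathcal C'$ are equivalent if there are invertible $h,g\in\mathcal L_{n,q}$ and a field automorphism $\sigma$ (acting on coefficients) with $\{h\circ f^\sigma\circ g\colon f\in\mathcal C\}=\mathcal C'$. *)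

(* Defs.v *)
(* Linearized polynomials over L = F_{q^n} are represented
   by their coefficient row vectors 'rV[L]_n : f = \sum_i f 0 i x^[i]. *)
From HB Require Import structures.
From mathcomp Require Import all_boot all_order all_algebra.
Set Implicit Arguments.
Unset Strict Implicit.
Unset Printing Implicit Defensive.
Import GRing.Theory.
Local Open Scope ring_scope.

Definition prime_power (q : nat) : Prop :=
  exists p e : nat, [/\ prime p, (0 < e)%N & q = (p ^ e)%N].

Section LinPoly.
Variables (L : finFieldType) (q n : nat).

(* exponent j of [j] = q^j, read modulo n (so [-s] = [n-s]) *)
Definition fexp (j : int) : nat := `|(j %% n%:Z)%Z|%N.

Definition qpow (a : L) (j : int) : L := a ^+ (q ^ fexp j).

(* f^[j] := x^[j] o f = \sum_i a_i^[j] x^[(i+j) mod n] *)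
Definition lfrob (j : int) (f : 'rV[L]_n) : 'rV[L]_n :=
  \row_(m < n) \sum_(i < n | ((i + fexp j) %% n == m)%N) qpow (f 0 i) j.

Definition lid : 'rV[L]_n := \row_(m < n) ((m == 0%N :> nat)%:R : L).

Definition lmono (j : int) : 'rV[L]_n := lfrob j lid.

Definition lcomp (h f : 'rV[L]_n) : 'rV[L]_n :=
  \sum_(j < n) h 0 j *: lfrob (Posz j) f.

Definition lev (f : 'rV[L]_n) (x : L) : L :=
  \sum_(i < n) f 0 i * x ^+ (q ^ i).

(* rank = dim_{F_q} of the image = log_q |im f| *)
Definition lrank (f : 'rV[L]_n) : nat := trunc_log q #|[set lev f x | x : L]|.

Definition linvertible (h : 'rV[L]_n) : Prop :=
  exists g : 'rV[L]_n, lcomp g h = lid /\ lcomp h g = lid.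

Definition lnorm (eta : L) : L := \prod_(i < n) eta ^+ (q ^ i).

Definition min_dist (C : {vspace 'rV[L]_n}) (d : nat) : Prop :=
  (exists f g, [/\ f \in C, g \in C, f != g & lrank (f - g) = d]) /\
  (forall f g, f \in C -> g \in C -> f != g -> (d <= lrank (f - g))%N).

Definition MRD (C : {vspace 'rV[L]_n}) : Prop :=
  exists d, min_dist C d /\
    #|[set f : 'rV[L]_n | f \in C]| = (q ^ (n * (n - d + 1)))%N.

Definition Gcode (k : nat) (s : int) : {vspace 'rV[L]_n} :=
  <<[seq lmono (s * i%:Z) | i <- iota 0 k]>>%VS.

Definition Hcode (k : nat) (s : int) (eta : L) : {vspace 'rV[L]_n} :=
  <<cons (lid + eta *: lmono (s * k%:Z))%R
      [seq lmono (s * i%:Z) | i <- iota 1 k.-1]>>%VS.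

Definition code_equiv (C C' : {vspace 'rV[L]_n}) : Prop :=
  exists (h g : 'rV[L]_n) (sigma : {rmorphism L -> L}),
    [/\ linvertible h, linvertible g, bijective sigma,
        forall f, f \in C -> lcomp h (lcomp (map_mx sigma f) g) \in C' &
        forall f', f' \in C' ->
          exists2 f, f \in C & f' = lcomp h (lcomp (map_mx sigma f) g)].

End LinPoly.

(* Main.v *)
Require Import Defs.
From HB Require Import structures.
From mathcomp Require Import all_boot all_order all_algebra all_field.
From mathcomp Require Import zify.
Import GRing.Theory.
Local Open Scope ring_scope.

Lemma span_map (K : fieldType) (vT : vectType K) (F : vT -> vT) (sg : K -> K)
    (X : seq vT) v :
  F 0 = 0 -> {morph F : a b / a + b} -> (forall a u, F (a *: u) = sg a *: F u) ->
  v \in <<X>>%VS -> F v \in <<map F X>>%VS.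
Proof.
move=> F0 FD FZ /(@coord_span _ _ _ (in_tuple X)) ->.
rewrite (big_morph F FD F0); apply: memv_suml => i _.
rewrite FZ; apply: memvZ; apply: memv_span.
by rewrite map_f // mem_nth.
Qed.

Section Lin.
Variables (L : finFieldType) (q n : nat).
Hypothesis q_gt1 : (1 < q)%N.
Hypothesis n_gt0 : (0 < n)%N.
Hypothesis cardL : #|L| = (q ^ n)%N.
Hypothesis frobD : forall e (a b : L), (a + b) ^+ (q ^ e) = a ^+ (q^e) + b ^+ (q^e).

Lemma fr0 e : (0 : L) ^+ (q ^ e) = 0.
Proof. by rewrite expr0n expn_eq0 eqn0Ngt (ltn_trans _ q_gt1). Qed.

Lemma fr_sum e (I : Type) (r : seq I) (P : pred I) (F : I -> L) :
  (\sum_(i <- r | P i) F i) ^+ (q ^ e) = \sum_(i <- r | P i) (F i) ^+ (q ^ e).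
Proof. exact: (big_morph (fun a : L => a ^+ (q ^ e)) (frobD e) (fr0 e)). Qed.

Lemma fr_comp e e' (a : L) : (a ^+ (q ^ e')) ^+ (q ^ e) = a ^+ (q ^ (e' + e)).
Proof. by rewrite -exprM expnD. Qed.

Lemma fr_n (a : L) : a ^+ (q ^ n) = a.
Proof. by rewrite -cardL expf_card. Qed.

Lemma fr_mod e (a : L) : a ^+ (q ^ e) = a ^+ (q ^ (e %% n)).
Proof.
rewrite {1}(divn_eq e n); elim: (e %/ n)%N => [|m IH]; first by rewrite mul0n add0n.
by rewrite mulSn -addnA expnD exprM fr_n.
Qed.

Lemma fexp_lt j : (fexp n j < n)%N.
Proof.
have nz : (n%:Z != 0) by rewrite eqz_nat -lt0n.
rewrite /fexp -ltz_nat gez0_abs ?modz_ge0 //.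
by rewrite ltz_pmod // ltz_nat.
Qed.

Lemma fexpZ j : (fexp n j)%:Z = (j %% n%:Z)%Z.
Proof.
have nz : (n%:Z != 0) by rewrite eqz_nat -lt0n.
by rewrite /fexp gez0_abs ?modz_ge0.
Qed.

Lemma fexpD a b : fexp n (a + b) = ((fexp n a + fexp n b) %% n)%N.
Proof.
apply/eqP; rewrite -eqz_nat fexpZ -modz_nat PoszD !fexpZ.
by rewrite modzDm.
Qed.

Lemma fexp_nat m : fexp n (Posz m) = (m %% n)%N.
Proof. by apply/eqP; rewrite -eqz_nat fexpZ modz_nat. Qed.

Lemma fr_fexp a b (x : L) :
  (x ^+ (q ^ fexp n b)) ^+ (q ^ fexp n a) = x ^+ (q ^ fexp n (b + a)).
Proof. by rewrite fr_comp fexpD -fr_mod. Qed.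

Lemma fr_fexp0 (x : L) : x ^+ (q ^ fexp n 0) = x.
Proof. by rewrite fexp_nat mod0n expn0 expr1. Qed.


Lemma lev_lfrob j (f : 'rV[L]_n) x :
  lev q (lfrob q j f) x = (lev q f x) ^+ (q ^ fexp n j).
Proof.
rewrite /lev fr_sum.
under eq_bigr => m _ do rewrite mxE mulr_suml.
rewrite (exchange_big_dep xpredT) //=.
apply: eq_bigr => i _.
have lt : (((i + fexp n j) %% n) < n)%N by rewrite ltn_pmod.
rewrite (big_pred1 (Ordinal lt)); last first.
  by move=> m /=; rewrite eq_sym.
rewrite /= -fr_mod expnD exprM /qpow exprMn //.
Qed.


Lemma lev_lid x : lev q (lid L n) x = x.
Proof.
rewrite /lev (bigD1 (Ordinal n_gt0)) //= big1 ?addr0.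
  by rewrite mxE /= mul1r expn0 expr1.
by move=> i /negbTE ne; rewrite mxE -val_eqE /= in ne *; rewrite ne mul0r.
Qed.

Lemma levD (f g : 'rV[L]_n) x : lev q (f + g) x = lev q f x + lev q g x.
Proof. by rewrite /lev -big_split; apply: eq_bigr => i _; rewrite mxE mulrDl. Qed.

Lemma levZ a (f : 'rV[L]_n) x : lev q (a *: f) x = a * lev q f x.
Proof. by rewrite /lev mulr_sumr; apply: eq_bigr => i _; rewrite mxE mulrA. Qed.

Lemma lev0 x : lev q (0 : 'rV[L]_n) x = 0.
Proof. by rewrite /lev big1 // => i _; rewrite mxE mul0r. Qed.

Lemma levB (f g : 'rV[L]_n) x : lev q (f - g) x = lev q f x - lev q g x.
Proof. by rewrite levD -scaleN1r levZ mulN1r. Qed.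

Lemma lev_sum (I : Type) (r : seq I) (P : pred I) (F : I -> 'rV[L]_n) x :
  lev q (\sum_(i <- r | P i) F i) x = \sum_(i <- r | P i) lev q (F i) x.
Proof. exact: (big_morph (fun f => lev q f x) (fun f g => levD f g x) (lev0 x)). Qed.

Lemma lev_lcomp (h f : 'rV[L]_n) x : lev q (lcomp q h f) x = lev q h (lev q f x).
Proof.
rewrite /lcomp lev_sum {2}/lev; apply: eq_bigr => j _.
by rewrite levZ lev_lfrob fexp_nat modn_small.
Qed.

Lemma lev_lmono j y : lev q (lmono L q n j) y = y ^+ (q ^ fexp n j).
Proof. by rewrite /lmono lev_lfrob lev_lid. Qed.


Lemma lev_zero (h : 'rV[L]_n) : (forall x, lev q h x = 0) -> h = 0.
Proof.
move=> hz.
pose P : {poly L} := \sum_(i < n) h 0 i *: 'X^(q ^ i).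
have coefP m : P`_m = \sum_(i < n) h 0 i * (m == q ^ i)%N%:R.
  by rewrite coef_sum; apply: eq_bigr => i _; rewrite coefZ coefXn.
have evalP x : P.[x] = lev q h x.
  by rewrite horner_sum; apply: eq_bigr => i _; rewrite hornerZ hornerXn.
have P0 : P = 0.
  apply/eqP; apply: contraT => nz.
  have allr : all (root P) (enum L) by apply/allP => x _; rewrite /root evalP hz.
  have := max_poly_roots nz allr (enum_uniq _).
  rewrite -cardE cardL => lt.
  have : (size P <= (q ^ n.-1).+1)%N.
    apply/leq_sizeP => j hj; rewrite coefP big1 // => i _.
    have : (q ^ i <= q ^ n.-1)%N.
      by rewrite leq_pexp2l ?(ltn_trans _ q_gt1) // -ltnS prednK.
    by move=> le; case: eqP => [E|_]; [rewrite E in hj; lia | rewrite mulr0].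
  have h1 : (0 < q ^ n.-1)%N by rewrite expn_gt0 (ltn_trans _ q_gt1).
  have h2 : (q ^ n = q * q ^ n.-1)%N by rewrite -expnS prednK.
  move: lt; rewrite h2; set Q := (q ^ n.-1)%N; move: h1; rewrite -/Q; set S := size P => h1 lt le; nia.
apply/rowP => i; rewrite mxE; have := coefP (q ^ i)%N.
rewrite P0 coef0 (bigD1 i) //= eqxx mulr1 big1 ?addr0 => [<-//|j ne].
by rewrite eqn_exp2l // val_eqE eq_sym (negbTE ne) mulr0.
Qed.

Lemma lev_inj (f g : 'rV[L]_n) : (forall x, lev q f x = lev q g x) -> f = g.
Proof.
move=> e; apply/eqP; rewrite -subr_eq0; apply/eqP/lev_zero => x.
by rewrite levB e subrr.
Qed.


Lemma lmono_delta j : lmono L q n j = delta_mx 0 (Ordinal (fexp_lt j)).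
Proof.
apply: lev_inj => y; rewrite lev_lmono /lev (bigD1 (Ordinal (fexp_lt j))) //=.
rewrite big1 ?addr0; first by rewrite mxE !eqxx mul1r.
by move=> i ne; rewrite mxE eqxx /= (negbTE ne) mul0r.
Qed.

Lemma fexp_inj (s : int) i j : gcdz s n%:Z = 1%N -> (i < n)%N -> (j < n)%N ->
  fexp n (s * i%:Z) = fexp n (s * j%:Z) -> i = j.
Proof.
move=> cop ilt jlt /(congr1 (fun m : nat => m%:Z)); rewrite !fexpZ => /eqP.
rewrite eqz_mod_dvd -mulrBr Gauss_dvdzr; last first.
  by rewrite /coprimez gcdzC cop.
rewrite -eqz_mod_dvd !modz_nat !modn_small // => /eqP; lia.
Qed.



Lemma main_sec (k : nat) (s : int) (C : {vspace 'rV[L]_n}) (p : 'rV[L]_n) (eta : L) :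
  gcdz s n%:Z = 1%N -> \dim C = k -> linvertible q p ->
  (<<[seq lfrob q (s * i%:Z) p | i <- iota 0 k.-1]>> <= C)%VS ->
  lfrob q (- s) p + eta *: lfrob q (s * (k.-1)%:Z) p \in C ->
  lfrob q (- s) p + eta *: lfrob q (s * (k.-1)%:Z) p
    \notin <<[seq lfrob q (s * i%:Z) p | i <- iota 0 k.-1]>>%VS ->
  code_equiv q C (Hcode q n k s (qpow q n eta s)).
Proof.
move=> cop dimC [pinv [hp1 hp2]] GC gC gG.
have pK x : lev q p (lev q pinv x) = x by rewrite -lev_lcomp hp2 lev_lid.
have pinvK x : lev q pinv (lev q p x) = x by rewrite -lev_lcomp hp1 lev_lid.
have k_gt0 : (0 < k)%N.
  rewrite lt0n; apply: contraNneq gG => k0.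
  move: dimC; rewrite k0 => /eqP; rewrite dimv_eq0 => /eqP C0.
  by move: gC; rewrite C0 memv0 k0 => /eqP ->; exact: mem0v.
have k_le : (k <= n)%N.
  by rewrite -dimC; have := dimvS (subvf C); rewrite dimvf /dim /= mul1n.
case: k dimC k_gt0 k_le GC gC gG => // k' dimC _ k_le GC gC gG /=.
set X := [seq lfrob q (s * i%:Z) p | i <- iota 0 k'] in GC gG *.
set g := lfrob q (- s) p + _ in gC gG *.
have sizeX : size X = k' by rewrite size_map size_iota.
have nthX (j : nat) : (j < k')%N -> X`_j = lfrob q (s * j%:Z) p.
  by move=> jk; rewrite (nth_map 0%N) ?size_iota // nth_iota.
have freeX : free X.
  suff : free (in_tuple X) by []. apply/freeP => c hc i.
  have hR : \sum_(j < size X) c j *: lmono L q n (s * (j : nat)%:Z) = 0.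
    apply: lev_zero => y.
    transitivity (lev q (\sum_(j < size X) c j *: X`_j) (lev q pinv y)); last by rewrite hc lev0.
    rewrite !lev_sum; apply: eq_bigr => j _; rewrite !levZ nthX -?sizeX //.
    by rewrite lev_lfrob lev_lmono pK.
  have := congr1 (fun R : 'rV[L]_n => R 0 (Ordinal (fexp_lt (s * (i : nat)%:Z)))) hR.
  rewrite /= summxE mxE (bigD1 i) //= big1.
    by rewrite lmono_delta !mxE !eqxx mulr1 addr0.
  move=> j ne; rewrite lmono_delta !mxE eqxx /=.
  case: eqP => [E|]; last by rewrite mulr0.
  have : i = j :> nat.
    have hj := ltn_ord j; have hi := ltn_ord i; have hX := sizeX.
    apply: (fexp_inj _ _ _ cop); try lia.
    exact: (congr1 val E).
  by move=> /val_inj ij; rewrite ij eqxx in ne.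
have freeY : free (g :: X) by rewrite free_cons gG freeX.
have CY : C = <<g :: X>>%VS.
  apply/eqP; rewrite eq_sym eqEdim; apply/andP; split.
    apply/span_subvP => v; rewrite inE => /orP [/eqP -> //| vX].
    exact: (subvP GC) (memv_span vX).
  by rewrite dimC (eqP freeY) /= sizeX.
pose phi : {rmorphism L -> L} := idfun.
have mapid f : map_mx phi f = f by apply: map_mx_id.
pose Phi f := lcomp q (lmono L q n s) (lcomp q f pinv).
pose Psi f := lcomp q (lcomp q (lmono L q n (- s)) f) p.
have levPhi f x : lev q (Phi f) x = (lev q f (lev q pinv x)) ^+ (q ^ fexp n s).
  by rewrite !lev_lcomp lev_lmono.
have levPsi f x : lev q (Psi f) x = (lev q f (lev q p x)) ^+ (q ^ fexp n (- s)).
  by rewrite !lev_lcomp lev_lmono.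
have PhiK f : Psi (Phi f) = f.
  by apply: lev_inj => x; rewrite levPsi levPhi pinvK fr_fexp addrN fr_fexp0.
have PsiK f : Phi (Psi f) = f.
  by apply: lev_inj => x; rewrite levPhi levPsi pK fr_fexp addNr fr_fexp0.
have Phi0 : Phi 0 = 0 by apply: lev_inj => x; rewrite levPhi !lev0 fr0.
have PhiD : {morph Phi : a b / a + b}.
  by move=> a b; apply: lev_inj => x; rewrite levD !levPhi levD frobD.
have PhiZ a f : Phi (a *: f) = a ^+ (q ^ fexp n s) *: Phi f.
  by apply: lev_inj => x; rewrite levZ !levPhi levZ exprMn.
have Psi0 : Psi 0 = 0 by apply: lev_inj => x; rewrite levPsi !lev0 fr0.
have PsiD : {morph Psi : a b / a + b}.
  by move=> a b; apply: lev_inj => x; rewrite levD !levPsi levD frobD.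
have PsiZ a f : Psi (a *: f) = a ^+ (q ^ fexp n (- s)) *: Psi f.
  by apply: lev_inj => x; rewrite levZ !levPsi levZ exprMn.
have mapg : Phi g = lid L n + qpow q n eta s *: lmono L q n (s * k'.+1%:Z).
    apply: lev_inj => x; rewrite levPhi /g !levD !levZ !lev_lfrob !pK lev_lid.
    rewrite frobD exprMn !fr_fexp addNr fr_fexp0 /qpow.
    have -> : s * (k'.+1.-1)%:Z + s = s * k'.+1%:Z.
      by rewrite /= (intS k') mulrDr mulr1 addrC.
    by [].
have mapX : map Phi X = [seq lmono L q n (s * i%:Z) | i <- iota 1 k'].
  rewrite (iotaDl 1 0) /X -!map_comp; apply: eq_map => i /=.
  apply: lev_inj => x; rewrite levPhi lev_lfrob pK lev_lmono fr_fexp.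
  by rewrite PoszD mulrDr mulr1 addrC.
have mapY : map Phi (g :: X) = (lid L n + qpow q n eta s *: lmono L q n (s * k'.+1%:Z))
     :: [seq lmono L q n (s * i%:Z) | i <- iota 1 k'].
  by rewrite -mapX -mapg.
exists (lmono L q n s), pinv, phi; split.
- exists (lmono L q n (- s)); split; apply: lev_inj => x;
    by rewrite lev_lcomp !lev_lmono lev_lid fr_fexp ?addrN ?addNr fr_fexp0.
- by exists p.
- by exists idfun.
- move=> f; rewrite mapid CY => /(span_map _ _ _ _ _ _ Phi0 PhiD PhiZ).
  by rewrite mapY.
- move=> f' hf'; exists (Psi f'); last by rewrite mapid; symmetry; exact: PsiK.
  have := span_map _ _ _ _ _ _ Psi0 PsiD PsiZ hf'.
  rewrite /Hcode -mapY -map_comp (@eq_map _ _ _ id) ?map_id ?CY //.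
Qed.

End Lin.

Theorem lemma3p8 (L : finFieldType) (q n k : nat) (s : int)
    (C : {vspace 'rV[L]_n}) (p : 'rV[L]_n) (eta : L) :
  prime_power q -> (0 < n)%N -> #|L| = (q ^ n)%N ->
  gcdz s n%:Z = 1%N ->
  \dim C = k -> MRD q C ->
  linvertible q p ->
  let G := <<[seq lfrob q (s * i%:Z) p | i <- iota 0 k.-1]>>%VS in
  (G <= C)%VS ->
  (exists2 g, (g \in C) && (g \notin G) &
     g = lfrob q (- s) p + eta *: lfrob q (s * (k.-1)%:Z) p) ->
  lnorm q n eta != (-1) ^+ (k * n) ->
  code_equiv q C (Hcode q n k s (qpow q n eta s)).
Proof.
move=> [p0 [e0 [pr e0_gt0 qE]]] n_gt0 cardL cop dimC _ invp G GC [g /andP [gC gG] gE] _.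
have q_gt1 : (1 < q)%N.
  rewrite qE -(prednK e0_gt0) expnS.
  have := prime_gt1 pr; have : (0 < p0 ^ e0.-1)%N by rewrite expn_gt0 prime_gt0.
  nia.
have pch : p0 \in [pchar L].
  by apply: (card_finPcharP (n := (e0 * n)%N)) => //; rewrite cardL qE expnM.
have frobD e (a b : L) : (a + b) ^+ (q ^ e) = a ^+ (q ^ e) + b ^+ (q ^ e).
  apply: exprDn_pchar; rewrite (eq_pnat _ (pcharf_eq pch)) qE -expnM pnatX.
  by rewrite pnat_id.
rewrite gE in gC gG.
exact: (@main_sec L q n q_gt1 n_gt0 cardL frobD k s C p eta cop dimC invp GC gC gG).
Qed.
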